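(* For all integers $n\geq 1$, $$qq(n)+\sum_{j\geq1}(-1)^j\left(qq(n-2j(3j-1))+qq(n-2j(3j+1))\right)=\begin{cases}1,&\text{if $n$ is a triangular number},\\0,&\text{otherwise,}\end{cases}$$ i.e. $qq(n)-qq(n-4)-qq(n-8)+qq(n-20)+qq(n-28)-qq(n-48)-qq(n-60)+\cdots$ equals $1$ if $n$ is triangular and $0$ otherwise.
   Context: $qq(n)$ denotes the number of partitions of $n$ into distinct odd parts, with $qq(0)=1$ and $qq(m)=0$ for $m<0$. A triangular number is an integer of the form $k(k+1)/2$ with $k\ge0$. *)

(* Defs.v *)
From mathcomp Require Import all_boot all_order all_algebra.
Set Implicit Arguments. Unset Strict Implicit. Unset Printing Implicit Defensive.
Import Order.TTheory GRing.Theory Num.Theory.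

(* qq n = number of partitions of n into distinct odd parts, i.e. the number
   of finite sets A of (positive) odd integers with sum n.  Every part is <= n,
   so A is a subset of {0,...,n}; 0 is even hence never a part.  qq 0 = 1. *)
Definition qq (n : nat) : nat :=
  #|[set A : {set 'I_n.+1} |
      [forall i in A, odd (nat_of_ord i)] && ((\sum_(i in A) nat_of_ord i) == n)]|.

Definition qqz (m : int) : int :=
  match m with
  | Posz k => (qq k)%:Z
  | Negz _ => 0%R
  end.

Definition triangular (n : nat) : Prop := exists k : nat, n = (k * k.+1) %/ 2.

(* Main.v *)
Require Import Defs.
From mathcomp Require Import all_boot all_order all_algebra.
From mathcomp Require Import ring zify.
Import Order.TTheory GRing.Theory Num.Theory.
Local Open Scope ring_scope.

Section QB.
Variable R : comRingType.
Variable p : R.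

Fixpoint qb (m k : nat) : R :=
  match m, k with
  | 0, 0 => 1
  | 0, _.+1 => 0
  | _.+1, 0 => 1
  | m'.+1, k'.+1 => qb m' k' + p ^+ k'.+1 * qb m' k'.+1
  end.

Lemma qb0 m : qb m 0 = 1. Proof. by case: m. Qed.
Lemma qbS m k : qb m.+1 k.+1 = qb m k + p ^+ k.+1 * qb m k.+1.
Proof. by []. Qed.
Lemma qb_gt m k : (m < k)%N -> qb m k = 0.
Proof.
elim: m k => [|m IH] [|k] //= H.
by rewrite !IH ?mulr0 ?addr0 // ltnW.
Qed.

Lemma qbS2 m k : qb m.+1 k.+1 = p ^+ (m - k) * qb m k + qb m k.+1.
Proof.
elim: m k => [|m IH] k.
  by case: k => [|k] //=; rewrite ?qb0 /= ?mulr0 ?mul1r ?addr0 // qb_gt.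
case: k => [|k].
  have h1 := IH 0%N. have h1' := qbS m 0.
  rewrite qbS !qb0 subn0 mulr1 [in LHS]h1 [in RHS]h1' !qb0 subn0 !mulr1.
  rewrite [p ^+ m.+1]exprS; ring.
have h1 := IH k. have h2 := IH k.+1.
have h1' := qbS m k. have h2' := qbS m k.+1.
rewrite [LHS]qbS [in LHS]h1 [in LHS]h2 subSS [in RHS]h1' [in RHS]h2'.
case: (ltnP k m) => Hkm.
  have E : p ^+ k.+2 * p ^+ (m - k.+1) = p ^+ (m - k) * p ^+ k.+1.
    by rewrite -!exprD; congr (_ ^+ _); lia.
  by rewrite !mulrDr mulrA E; ring.
by rewrite (@qb_gt m k.+1) //; ring.
Qed.

Lemma qb_ratio m k : qb m k.+1 * (1 - p ^+ k.+1) = qb m k * (1 - p ^+ (m - k)).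
Proof.
have := qbS2 m k; rewrite qbS => E.
apply/eqP; rewrite -subr_eq0; apply/eqP.
have : (p ^+ (m - k) * qb m k + qb m k.+1) - (qb m k + p ^+ k.+1 * qb m k.+1) = 0.
  by rewrite E subrr.
move=> <-; ring.
Qed.

Definition Fq (m : nat) : R := \prod_(0 <= l < m) (1 - p ^+ l.+1).

Lemma FqS m : Fq m.+1 = Fq m * (1 - p ^+ m.+1).
Proof. by rewrite /Fq big_nat_recr. Qed.

Lemma qb_prod m k : (k <= m)%N -> qb m k * Fq k * Fq (m - k) = Fq m.
Proof.
elim: k => [|k IH] H; first by rewrite qb0 subn0 /Fq big_nil !mul1r.
rewrite -IH ?(ltnW H) //.
have -> : (m - k = (m - k.+1).+1)%N by lia.
rewrite !FqS.
have E := qb_ratio m k.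
have -> : (m - k.+1).+1 = (m - k)%N by lia.
transitivity (qb m k.+1 * (1 - p ^+ k.+1) * Fq k * Fq (m - k.+1)); first ring.
rewrite E; ring.
Qed.
End QB.
Arguments qb {R} p m k.
Arguments Fq {R} p m.

Lemma binS2 j : 'C(j.+1, 2) = ('C(j, 2) + j)%N.
Proof. by rewrite binS bin1. Qed.

Section JTP.
Variable R : comRingType.
Variables a w p : R.
Hypothesis haw : a * w = p.

Definition tau (n i : nat) : R :=
  if (n <= i)%N then a ^+ (i - n) * p ^+ 'C(i - n, 2)
  else w ^+ (n - i) * p ^+ 'C(n - i, 2).

Lemma tau_pos n j : tau n (n + j) = a ^+ j * p ^+ 'C(j, 2).
Proof. by rewrite /tau leq_addr addKn. Qed.

Lemma tau_neg i m : tau (i + m.+1) i = w ^+ m.+1 * p ^+ 'C(m.+1, 2).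
Proof.
rewrite /tau ifF; last by apply/negbTE; rewrite -ltnNge; lia.
by have -> : (i + m.+1 - i = m.+1)%N by lia.
Qed.

Lemma tau_split n i : (exists j, i = n + j)%N \/ (exists m, n = i + m.+1)%N.
Proof.
case: (leqP n i) => H; [left; exists (i - n)%N | right; exists (n - i.+1)%N]; lia.
Qed.

Lemma L1 n i : tau n.+1 i.+1 = tau n i.
Proof. by rewrite /tau ltnS !subSS. Qed.

Lemma L2 n i : w * p ^+ n * tau n i = p ^+ i * tau n.+1 i.
Proof.
case: (tau_split n i) => [[j ->]|[m ->]].
  case: j => [|j].
    rewrite addn0 /tau leqnn ltnn subnn subSnn /= expr0 !mulr1 expr1 mulrC.
    done.
  rewrite tau_pos -addSnnS tau_pos binS2; move: ('C(j, 2)) => C.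
  rewrite !exprD !exprS -haw; ring.
rewrite tau_neg -addnS tau_neg (binS2 m.+1); move: ('C(m.+1, 2)) => C.
rewrite !exprD !exprS -haw; ring.
Qed.

Lemma L3 n i : (i <= 2 * n)%N -> a * p ^+ n * tau n i = p ^+ (2 * n - i) * tau n.+1 i.+2.
Proof.
case: (tau_split n i) => [[j ->]|[m ->]] H.
  have -> : (n + j).+2 = (n.+1 + j.+1)%N by lia.
  rewrite !tau_pos binS2; move: ('C(j, 2)) => C.
  have -> : (2 * n - (n + j) = n - j)%N by lia.
  have E : p ^+ n = p ^+ (n - j) * p ^+ j by rewrite -exprD subnK //; lia.
  rewrite E !exprD !exprS; ring.
case: m H => [|m] H.
  have -> : (i + 1).+1 = i.+2 by lia.
  rewrite /tau leqnn subnn ifF; last by apply/negbTE; rewrite -ltnNge; lia.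
  have -> : (i + 1 - i = 1)%N by lia.
  have -> : (2 * (i + 1) - i = (i + 1).+1)%N by lia.
  rewrite /= !expr0 !mulr1 !exprS !exprD expr1 -haw; ring.
rewrite tau_neg.
have -> : (i + m.+2).+1 = (i.+2 + m.+1)%N by lia.
rewrite tau_neg (binS2 m.+1); move: ('C(m.+1, 2)) => C.
have -> : (2 * (i + m.+2) - i = i + m.+2 + m.+2)%N by lia.
rewrite !exprD !exprS -haw; ring.
Qed.

Lemma E1 n : qb p (2 * n.+1) 1 = 1 + p ^+ (2 * n).+1 + p * qb p (2 * n) 1.
Proof.
have -> : (2 * n.+1 = (2 * n).+2)%N by lia.
rewrite qbS qb0 qbS2 subn0 qb0 mulr1 expr1 mulrDr -exprS; ring.
Qed.

Lemma E2 n i : qb p (2 * n.+1) i.+2 = p ^+ (2 * n - i) * qb p (2 * n) i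
   + (1 + p ^+ (2 * n).+1) * qb p (2 * n) i.+1 + p ^+ i.+2 * qb p (2 * n) i.+2.
Proof.
have -> : (2 * n.+1 = (2 * n).+2)%N by lia.
rewrite qbS !qbS2.
case: (ltnP i (2 * n)) => H.
  have E : p ^+ i.+2 * p ^+ (2 * n - i.+1) = p ^+ (2 * n).+1.
    by rewrite -exprD; congr (_ ^+ _); lia.
  rewrite mulrDr mulrA E; ring.
rewrite (@qb_gt _ _ (2 * n) i.+1) //; ring.
Qed.

Definition Fac (k : nat) : {poly R} :=
  (1 + (a * p ^+ k)%:P * 'X) * ('X + (w * p ^+ k)%:P).
Definition Qp (n : nat) : {poly R} := \prod_(0 <= k < n) Fac k.
Definition cc (n i : nat) : R := qb p (2 * n) i * tau n i.

Lemma Fac_coef (P : {poly R}) k i :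
  (P * Fac k)`_i = P`_i * (w * p ^+ k)
    + (if i is i'.+1 then P`_i' * (1 + p ^+ (2 * k).+1) else 0)
    + (if i is i'.+2 then P`_i' * (a * p ^+ k) else 0).
Proof.
have -> : Fac k = (w * p ^+ k)%:P + (1 + p ^+ (2 * k).+1)%:P * 'X
                  + (a * p ^+ k)%:P * 'X^2.
  rewrite /Fac.
  have -> : 1 + p ^+ (2 * k).+1 = 1 + (a * p ^+ k) * (w * p ^+ k).
    by rewrite exprS -haw; congr (_ + _); rewrite mul2n -addnn exprD; ring.
  rewrite polyCD polyCM polyC1; ring.
rewrite !mulrDr !coefD coefMC !mulrA !coefMX !coefMC !mulrA.
by case: i => [|[|i]] //=; rewrite mulrA.
Qed.

Lemma coefQ n i : (Qp n)`_i = cc n i.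
Proof.
elim: n i => [|n IH] i.
  rewrite /Qp big_nil coef1 /cc /tau.
  case: i => [|i] /=; first by rewrite !expr0 !mulr1.
  by rewrite mul0r.
rewrite /Qp big_nat_recr //= -/(Qp n) Fac_coef.
case: i => [|[|i]]; rewrite ?IH ?IH ?IH /cc.
- by rewrite !qb0 !mul1r addr0 mulrC L2 expr0 mul1r addr0.
- rewrite E1 qb0 mul1r addr0 -(L1 n 0) -mulrA [tau n 1 * _]mulrC L2 expr1; ring.
- have T1 : tau n i.+2 * (w * p ^+ n) = p ^+ i.+2 * tau n.+1 i.+2.
    by rewrite mulrC L2.
  have H1 := L1 n i.+1.
  rewrite E2; move: (p ^+ i.+2) T1 => P2 T1.
  rewrite -!mulrA T1 -H1.
  case: (leqP i (2 * n)) => Hi.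
    have T3 : tau n i * (a * p ^+ n) = p ^+ (2 * n - i) * tau n.+1 i.+2.
      by rewrite mulrC L3.
    rewrite T3; ring.
  rewrite (@qb_gt _ _ (2 * n) i) //; ring.
Qed.
Lemma JTP n : \prod_(0 <= k < n) ((1 + a * p ^+ k) * (1 + w * p ^+ k))
  = \sum_(i < (2 * n).+1) qb p (2 * n) i * tau n i.
Proof.
have Hs : (size (Qp n) <= (2 * n).+1)%N.
  by apply/leq_sizeP => j Hj; rewrite coefQ /cc qb_gt ?mul0r.
transitivity (Qp n).[1].
  by rewrite /Qp horner_prod; apply: eq_bigr => k _; rewrite /Fac !hornerE.
rewrite (horner_coef_wide 1 Hs); apply: eq_bigr => i _.
by rewrite expr1n mulr1 coefQ.
Qed.
End JTP.

Section EQM.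
Variable R : comRingType.
Implicit Types f g h : {poly R}.

Definition eqm N f g := forall i, (i < N)%N -> f`_i = g`_i.

Lemma eqm_refl N f : eqm N f f. Proof. by []. Qed.
Lemma eqm_sym N f g : eqm N f g -> eqm N g f.
Proof. by move=> H i Hi; rewrite H. Qed.
Lemma eqm_trans N f g h : eqm N f g -> eqm N g h -> eqm N f h.
Proof. by move=> H1 H2 i Hi; rewrite H1 // H2. Qed.
Lemma eqm_le N M f g : (M <= N)%N -> eqm N f g -> eqm M f g.
Proof. by move=> HM H i Hi; apply: H; apply: leq_trans HM. Qed.
Lemma eqmD N f g f' g' : eqm N f g -> eqm N f' g' -> eqm N (f + f') (g + g').
Proof. by move=> H1 H2 i Hi; rewrite !coefD H1 // H2. Qed.
Lemma eqmMl N f g h : eqm N f g -> eqm N (h * f) (h * g).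
Proof.
move=> H i Hi; rewrite !coefM; apply: eq_bigr => j _; rewrite H //.
by apply: leq_ltn_trans Hi; apply: leq_subr.
Qed.
Lemma eqmM N f g f' g' : eqm N f g -> eqm N f' g' -> eqm N (f * f') (g * g').
Proof.
move=> H1 H2; apply: (@eqm_trans _ _ (f * g')); first exact: eqmMl.
by rewrite ![f * _]mulrC ![g * _]mulrC; apply: eqmMl.
Qed.
Lemma eqm_sum N (I : Type) (r : seq I) (P : pred I) (F G : I -> {poly R}) :
  (forall i, P i -> eqm N (F i) (G i)) ->
  eqm N (\sum_(i <- r | P i) F i) (\sum_(i <- r | P i) G i).
Proof.
move=> H; apply: (big_ind2 (eqm N)) => //.
by move=> *; apply: eqmD.
Qed.
Lemma eqm_prod N (I : Type) (r : seq I) (P : pred I) (F G : I -> {poly R}) :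
  (forall i, P i -> eqm N (F i) (G i)) ->
  eqm N (\prod_(i <- r | P i) F i) (\prod_(i <- r | P i) G i).
Proof.
move=> H; apply: (big_ind2 (eqm N)) => //.
by move=> *; apply: eqmM.
Qed.
Lemma eqm_X N e h : (N <= e)%N -> eqm N ('X^e * h) 0.
Proof.
move=> He i Hi; rewrite coefXnM coef0 ifT //; exact: leq_trans Hi He.
Qed.
Lemma eqm_shift N e f g : eqm N f g -> eqm (e + N) ('X^e * f) ('X^e * g).
Proof.
move=> H i Hi; rewrite !coefXnM; case: ifP => // Hie.
by apply: H; lia.
Qed.
Lemma eqm_cancel N f g h : f`_0 = 1 -> eqm N (f * g) (f * h) -> eqm N g h.
Proof.
move=> f0 H.
suff D : forall i, (i < N)%N -> (g - h)`_i = 0.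
  by move=> i Hi; apply/eqP; rewrite -subr_eq0 -coefB D.
have H' : eqm N (f * (g - h)) 0.
  move=> i Hi; rewrite mulrBr coefB H // subrr coef0 //.
elim/ltn_ind => i IH Hi.
have := H' i Hi; rewrite coefMr big_ord_recr /= subnn f0 mul1r.
rewrite big1 ?add0r ?coef0 // => j _.
by rewrite IH ?mulr0 //; apply: ltn_trans Hi.
Qed.
End EQM.
Arguments eqm {R} N f g.

Section Trunc.
Variable R : comRingType.
Variable b : nat.
Hypothesis b0 : (0 < b)%N.
Notation P := ('X^b : {poly R}).

Lemma eqm_1X N e (c : R) : (N <= e)%N -> eqm N (1 + c%:P * 'X^e) 1.
Proof.
move=> He i Hi; rewrite coefD coefCM coefXn.
have -> : (i == e) = false by apply/negbTE; apply/eqP; lia.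
by rewrite mulr0 addr0.
Qed.

Lemma eqm_1Xm N e : (N <= e)%N -> eqm N (1 - 'X^e : {poly R}) 1.
Proof.
move=> He; have := @eqm_1X N e (-1) He.
by rewrite polyCN polyC1 mulN1r.
Qed.

Lemma Fq_ext r K : (r <= K)%N -> eqm (b * r.+1) (Fq P K) (Fq P r).
Proof.
move=> H; rewrite -(subnK H); elim: (K - r)%N => [|d IH]; first by [].
rewrite addSn FqS -[Fq P r]mulr1; apply: eqmM => //.
rewrite -exprM; apply: eqm_1Xm; rewrite leq_mul2l; lia.
Qed.

Lemma Fq0 r : (Fq P r)`_0 = 1.
Proof.
have := @Fq_ext 0 r (leq0n _) 0%N; rewrite muln1 => ->//.
by rewrite /Fq big_nil coef1.
Qed.

Lemma qb_trunc m k : (k <= m)%N ->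
  eqm (b * (minn k (m - k)).+1) (qb P m k * Fq P m) 1.
Proof.
move=> Hk; set r := minn k (m - k).
have Hr1 : (r <= k)%N by apply: geq_minl.
have Hr2 : (r <= m - k)%N by apply: geq_minr.
have Hr3 : (r <= m)%N by lia.
have E1 := @Fq_ext r _ Hr1. have E2 := @Fq_ext r _ Hr2. have E3 := @Fq_ext r _ Hr3.
have C : eqm (b * r.+1) (qb P m k * Fq P r) 1.
  apply: (@eqm_cancel _ _ (Fq P r)); first exact: Fq0.
  rewrite mulr1.
  apply: (@eqm_trans _ _ _ (Fq P m)); last exact: E3.
  rewrite -(@qb_prod _ P m k Hk).
  have -> : Fq P r * (qb P m k * Fq P r) = qb P m k * Fq P r * Fq P r by ring.
  apply: eqmM; last exact: eqm_sym.
  by apply: eqmMl; apply: eqm_sym.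
apply: eqm_trans C; exact: eqmMl.
Qed.
End Trunc.

Arguments tau {R} a w p n i.

Lemma JTP_trunc (b : nat) (b0 : (0 < b)%N) (a w : {poly int}) n N
   (c : nat -> {poly int}) (e : nat -> nat) :
  a * w = 'X^b ->
  (forall i, (i < (2 * n).+1)%N -> tau a w 'X^b n i = c i * 'X^(e i)) ->
  (forall i, (i < (2 * n).+1)%N -> (N <= e i + b * (minn i (2 * n - i)).+1)%N) ->
  eqm N (\prod_(0 <= k < n) ((1 + a * 'X^b ^+ k) * (1 + w * 'X^b ^+ k)) * Fq 'X^b (2 * n))
        (\sum_(i < (2 * n).+1) c i * 'X^(e i)).
Proof.
move=> haw Ht HN.
rewrite (@JTP _ _ _ _ haw) mulr_suml; apply: eqm_sum => i _.
rewrite Ht // mulrCA -!mulrA -[c i * 'X^(e i)]mulr1 -[c i * 'X^(e i) * 1]mulrA.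
apply: eqmMl; apply: (@eqm_le _ _ _ _ _ (HN i (ltn_ord i))).
rewrite mulrCA.
apply: eqm_shift; apply: qb_trunc => //; have := ltn_ord i; lia.
Qed.

Definition GL n : {poly int} :=
  \prod_(0 <= k < n) ((1 + 'X^3 * 'X^4 ^+ k) * (1 + 'X * 'X^4 ^+ k)).
Definition PL n : {poly int} :=
  \prod_(0 <= k < n) ((1 + (- 'X^8) * 'X^12 ^+ k) * (1 + (- 'X^4) * 'X^12 ^+ k)).
Definition eG n i := if (n <= i)%N then (3 * (i - n) + 4 * 'C((i - n)%N, 2))%N
                     else ((n - i) + 4 * 'C((n - i)%N, 2))%N.
Definition eP n i := if (n <= i)%N then (8 * (i - n) + 12 * 'C((i - n)%N, 2))%N
                     else (4 * (n - i) + 12 * 'C((n - i)%N, 2))%N.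
Definition sP n i : {poly int} := (-1) ^+ (if (n <= i)%N then (i - n)%N else (n - i)%N).

Lemma gauss_trunc n : eqm n.+1 (GL n * Fq 'X^4 (2 * n))
   (\sum_(i < (2 * n).+1) 1 * 'X^(eG n i)).
Proof.
apply: (@JTP_trunc 4 isT 'X^3 'X n n.+1 (fun _ => 1) (eG n)).
- by rewrite -exprSr.
- move=> i _; rewrite /tau /eG; case: ifP => _; by rewrite mul1r -!exprM -exprD.
- move=> i Hi; rewrite /eG; case: ifP => H; move: ('C(_, _)) => C; lia.
Qed.

Lemma pent_trunc n : eqm n.+1 (PL n * Fq 'X^12 (2 * n))
   (\sum_(i < (2 * n).+1) sP n i * 'X^(eP n i)).
Proof.
apply: (@JTP_trunc 12 isT (- 'X^8) (- 'X^4) n n.+1 (sP n) (eP n)).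
- rewrite mulrNN -exprD; congr (_ ^+ _).
- move=> i _; rewrite /tau /eP /sP; case: ifP => _;
  rewrite ?(exprNn ('X^8)) ?(exprNn ('X^4)) -mulrA;
  congr (_ * _); rewrite -!exprM -exprD; congr (_ ^+ _).
- move=> i Hi; rewrite /eP; case: ifP => H; move: ('C(_, _)) => C; lia.
Qed.

Definition Po (K : nat) : {poly int} := \prod_(0 <= k < K) (1 + 'X^((2 * k).+1)).

Lemma odd_prod m :
  \prod_(0 <= i < m) ((odd i)%:R *: 'X^i + 1 : {poly int}) = Po m./2.
Proof.
elim: m => [|m IH]; first by rewrite /Po !big_nil.
rewrite big_nat_recr // IH /Po.
case: (boolP (odd m)) => Hm /=.
  rewrite scale1r uphalf_half Hm /= add1n big_nat_recr //= addrC; congr (_ * (_ + _)).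
  congr ('X^ _); have := odd_double_half m; rewrite Hm /=; lia.
by rewrite scale0r add0r mulr1 uphalf_half (negbTE Hm) add0n.
Qed.

Lemma prod_odd_indic (t : nat) (J : {set 'I_t.+1}) :
  \prod_(i in J) ((odd i)%:R : int) = ([forall i in J, odd i] : nat)%:R.
Proof.
case: (boolP [forall i in J, odd i]) => H.
  by rewrite big1 // => i Hi; move/forall_inP: H => /(_ i Hi) ->.
move/forall_inPn: H => [i Hi Ho].
by rewrite (bigD1 i) //= (negbTE Ho) mul0r.
Qed.

Lemma qq_coef t : (qq t)%:R = (Po t.+1./2)`_t.
Proof.
rewrite -odd_prod big_mkord.
rewrite bigA_distr.
have -> : \sum_(J in {set 'I_t.+1})
     \prod_i (if i \in J then (odd i)%:R *: 'X^i else 1 : {poly int})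
   = \sum_(J in {set 'I_t.+1})
       ([forall i in J, odd i] : nat)%:R *: 'X^(\sum_(i in J) nat_of_ord i).
  apply: eq_bigr => J _; rewrite -big_mkcond scaler_prod prodrXr.
  by rewrite prod_odd_indic.
rewrite coef_sumMXn /qq.
rewrite (eq_bigr (fun J : {set 'I_t.+1} => if [forall i in J, odd i] then 1 else 0)); last first.
  by move=> J _; case: ([forall i in J, odd i]).
rewrite -big_mkcondr.
transitivity (\sum_(A in [set A : {set 'I_t.+1} | [forall i in A, odd i] &
      (\sum_(i in A) nat_of_ord i == t)%N]) (1 : int)); first by rewrite sumr_const.
apply: eq_bigl => A; rewrite !inE /=; by rewrite andbC.
Qed.

Lemma GL_Po n : GL n = Po (2 * n).
Proof.
elim: n => [|n IH]; first by rewrite /GL /Po !big_nil.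
rewrite /GL big_nat_recr // -/(GL n) IH /Po.
have -> : (2 * n.+1 = (2 * n).+2)%N by lia.
rewrite !big_nat_recr //= -/(Po _) -mulrA; congr (_ * _).
rewrite -!exprM -exprD -exprS mulrC.
have -> : ((2 * (2 * n).+1).+1 = 3 + 4 * n)%N by lia.
by have -> : ((2 * (2 * n)).+1 = (4 * n).+1)%N by lia.
Qed.

Lemma PL_Fq n : PL n * Fq 'X^12 n = Fq 'X^4 (3 * n).
Proof.
elim: n => [|n IH]; first by rewrite /PL /Fq !big_nil mulr1.
rewrite /PL big_nat_recr // -/(PL n) FqS.
have -> : (3 * n.+1 = (3 * n).+3)%N by lia.
rewrite !FqS -IH.
have -> : PL n * ((1 + - 'X^8 * 'X^12 ^+ n) * (1 + - 'X^4 * 'X^12 ^+ n)) *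
   (Fq 'X^12 n * (1 - 'X^12 ^+ n.+1)) =
   PL n * Fq 'X^12 n * (((1 + - 'X^4 * 'X^12 ^+ n) * (1 + - 'X^8 * 'X^12 ^+ n)) *
   (1 - 'X^12 ^+ n.+1)) by ring.
rewrite -!mulrA; congr (_ * (_ * _)).
rewrite !mulNr -!exprM -!exprD.
have -> : (4 + 12 * n = 4 * (3 * n).+1)%N by lia.
have -> : (8 + 12 * n = 4 * (3 * n).+2)%N by lia.
have -> : (12 * n.+1 = 4 * (3 * n).+3)%N by lia.
by rewrite mulrA.
Qed.

Lemma Po_ext K K' : (K <= K')%N -> eqm (2 * K).+1 (Po K') (Po K).
Proof.
move=> H; rewrite -(subnK H); elim: (K' - K)%N => [|d IH]; first by [].
rewrite addSn /Po big_nat_recr // -/(Po _) -[Po K]mulr1; apply: eqmM => //.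
have := @eqm_1X _ 1 isT (2 * K).+1 ((2 * (d + K)).+1) (1 : int); rewrite polyC1 mul1r.
by apply; lia.
Qed.

Lemma GL_coef n t : (t <= n)%N -> (GL n)`_t = (qq t)%:R.
Proof.
move=> Ht; rewrite qq_coef GL_Po.
apply: (@Po_ext t.+1./2 (2 * n)); first by have := half_leq (leq_trans Ht (leqnSn n)); lia.
have := odd_double_half t.+1; lia.
Qed.

Lemma sum_center (V : zmodType) n (F : nat -> V) :
  \sum_(i < (2 * n).+1) F i = F n + \sum_(1 <= j < n.+1) (F (n + j)%N + F (n - j)%N).
Proof.
rewrite -(big_mkord xpredT F) (@big_cat_nat _ _ _ n) //=; last by lia.
rewrite (@big_ltn _ _ _ n) //; last by lia.
have -> : \sum_(n.+1 <= i < (2 * n).+1) F i = \sum_(1 <= j < n.+1) F (n + j)%N.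
  rewrite -(add1n n) big_addn.
  have -> : ((2 * n).+1 - n = (1 + n))%N by lia.
  by apply: eq_bigr => j _; rewrite addnC.
have -> : \sum_(0 <= i < n) F i = \sum_(1 <= j < n.+1) F (n - j)%N.
  by rewrite big_nat_rev big_add1 /=; apply: eq_bigr => j _; rewrite add0n.
rewrite big_split /=; set A := \sum_(1 <= j < n.+1) F (n - j)%N; set B := \sum_(1 <= j < n.+1) F (n + j)%N.
by rewrite addrCA [B + A]addrC.
Qed.

Definition ThP n := \sum_(i < (2 * n).+1) sP n i * 'X^(eP n i).
Definition ThG n := \sum_(i < (2 * n).+1) 1 * 'X^(eG n i) : {poly int}.

Lemma main_eqm n : eqm n.+1 (GL n * ThP n) (ThG n).
Proof.
have h1 : eqm n.+1 (ThP n) (Fq 'X^4 (2 * n)).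
  rewrite /ThP.
  apply: eqm_trans; first (apply: eqm_sym; exact: pent_trunc).
  apply: (@eqm_trans _ _ _ (PL n * Fq 'X^12 n)).
    apply: eqmMl; apply: (@eqm_le _ (12 * n.+1)); first lia.
    by apply: (@Fq_ext _ 12 isT); lia.
  rewrite PL_Fq; apply: (@eqm_le _ (4 * (2 * n).+1)); first lia.
  by apply: (@Fq_ext _ 4 isT); lia.
rewrite /ThG; apply: eqm_trans; first exact: (@eqmMl _ _ _ _ (GL n) h1).
exact: gauss_trunc.
Qed.

Lemma sign_poly k : (-1 : {poly int}) ^+ k = ((-1) ^+ k)%:P.
Proof. by rewrite rmorphXn /= polyCN polyC1. Qed.

Definition Qz n e : int := if (n < e)%N then 0 else (qq (n - e))%:R.
Definition kk n i := if (n <= i)%N then (i - n)%N else (n - i)%N.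

Lemma lhs_coef n : (GL n * ThP n)`_n =
   \sum_(i < (2 * n).+1) (-1) ^+ (kk n i) * Qz n (eP n i).
Proof.
rewrite /ThP mulr_sumr coef_sum; apply: eq_bigr => i _.
rewrite /sP -/(kk n i) sign_poly mulrCA coefCM coefMXn /Qz.
case: ifP => // H; rewrite GL_coef //; exact: leq_subr.
Qed.

Lemma rhs_coef n : (ThG n)`_n = \sum_(i < (2 * n).+1) ((eG n i == n) : nat)%:R.
Proof.
rewrite /ThG coef_sum; apply: eq_bigr => i _.
by rewrite mul1r coefXn eq_sym.
Qed.

Lemma C2 j : ('C(j, 2) * 2 = j * (j - 1))%N.
Proof.
elim: j => [|j IH] //; rewrite binS2 mulnDl IH subSS subn0.
case: j {IH} => [|j] //; rewrite subSS subn0; ring.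
Qed.

Lemma qqz_Qz n e : qqz (n%:Z - e%:Z) = Qz n e.
Proof.
rewrite /Qz; case: ltnP => H.
  have -> : n%:Z - e%:Z = Negz (e - n).-1.
    rewrite NegzE; have -> : (e - n).-1.+1 = (e - n)%N by lia.
    by rewrite -subzn ?opprB //; lia.
  by [].
by rewrite subzn //= natz.
Qed.

Lemma S_eq n :
  (qq n)%:Z + \sum_(1 <= j < n.+1)
       (-1) ^+ j * (qqz (n%:Z - (2 * j * (3 * j - 1))%N%:Z)
                    + qqz (n%:Z - (2 * j * (3 * j + 1))%N%:Z))
  = \sum_(i < (2 * n).+1) (-1) ^+ (kk n i) * Qz n (eP n i).
Proof.
rewrite (@sum_center _ n (fun i => (-1) ^+ (kk n i) * Qz n (eP n i))) /=; congr (_ + _).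
  have -> : eP n n = 0%N by rewrite /eP leqnn subnn.
  by rewrite /kk leqnn subnn expr0 mul1r /Qz /= subn0 natz.
rewrite !big_nat; apply: eq_bigr => j /andP [Hj1 Hj2].
rewrite !qqz_Qz /kk /eP leq_addr addKn.
have -> : (n <= n - j)%N = false by apply/negbTE; lia.
have -> : (n - (n - j) = j)%N by lia.
have E1 : (8 * j + 12 * 'C(j, 2) = 2 * j * (3 * j + 1))%N.
  have := C2 j; move: ('C(j, 2)) => C; nia.
have E2 : (4 * j + 12 * 'C(j, 2) = 2 * j * (3 * j - 1))%N.
  have := C2 j; move: ('C(j, 2)) => C; case: j {E1 Hj1 Hj2} => [|j]; nia.
by rewrite E1 E2 mulrDr addrC.
Qed.

Definition kap n i := if (n <= i)%N then (2 * (i - n))%N else (2 * (n - i)).-1.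

Lemma eG_T n i : eG n i = 'C((kap n i).+1, 2).
Proof.
rewrite /eG /kap; case: ifP => H.
  have := C2 (i - n); have := C2 (2 * (i - n)).+1.
  move: ('C(i - n, 2)) ('C((2 * (i - n)).+1, 2)) (i - n)%N => C D j; nia.
have -> : (2 * (n - i)).-1.+1 = (2 * (n - i))%N by lia.
have := C2 (n - i); have := C2 (2 * (n - i)).
move: ('C(n - i, 2)) ('C(2 * (n - i), 2)) (n - i)%N => C D j; nia.
Qed.

Lemma T_inj k k' : 'C(k.+1, 2) = 'C(k'.+1, 2) -> k = k'.
Proof.
have := C2 k.+1; have := C2 k'.+1.
move: ('C(k.+1, 2)) ('C(k'.+1, 2)) => C D; rewrite !subSS !subn0 => h1 h2 E.
subst D; nia.
Qed.

Lemma tri_eq k : 'C(k.+1, 2) = ((k * k.+1) %/ 2)%N.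
Proof. by rewrite bin2 /= -divn2 mulnC. Qed.

Lemma kap_inj n i i' : kap n i = kap n i' -> i = i'.
Proof. rewrite /kap -!subn1; case: ifP => H; case: ifP => H'; lia. Qed.

Lemma rhs_val n : (0 < n)%N ->
  let s := \sum_(i < (2 * n).+1) ((eG n i == n) : nat)%:R : int in
  (triangular n -> s = 1) /\ (~ triangular n -> s = 0).
Proof.
move=> n0 s; split.
  move=> [k Hk]; rewrite -tri_eq in Hk.
  have Hk1 : (1 <= k)%N by case: k Hk => [|k] // Hk; rewrite Hk in n0.
  have Hkn : (k <= n)%N.
    have := C2 k.+1; rewrite Hk subSS subn0; nia.
  have Hd := odd_double_half k.
  move: (k./2) Hd => h Hd.
  have Hkap : kap n (if odd k then (n - (odd k + h))%N else (n + h)%N) = k.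
    rewrite /kap -!subn1; case: (odd k) Hd => /= Hd.
      rewrite ifF; last by apply/negbTE; rewrite -ltnNge; lia.
      lia.
    rewrite ifT; lia.
  have Hi0 : ((if odd k then (n - (odd k + h))%N else (n + h)%N) < (2 * n).+1)%N.
    case: (odd k) Hd => /= Hd; lia.
  rewrite /s (bigD1 (Ordinal Hi0)) //= eG_T Hkap -Hk eqxx big1 ?addr0 //.
  move=> i Hi; case: eqP => // E; exfalso; move/eqP: Hi; apply.
  apply/val_inj => /=; apply: (@kap_inj n); rewrite Hkap; apply: T_inj.
  by rewrite -eG_T E.
move=> Hn; rewrite /s big1 // => i _; case: eqP => // E; exfalso; apply: Hn.
by exists (kap n i); rewrite -tri_eq -eG_T E.
Qed.


Theorem theorem5 (n : nat) : (1 <= n)%N ->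
  let S : int :=
    (qq n)%:Z + \sum_(1 <= j < n.+1)
       (-1) ^+ j * (qqz (n%:Z - (2 * j * (3 * j - 1))%N%:Z)
                    + qqz (n%:Z - (2 * j * (3 * j + 1))%N%:Z)) in
  (triangular n -> S = 1) /\ (~ triangular n -> S = 0).
Proof.
move=> n1 S.
have -> : S = (GL n * ThP n)`_n by rewrite /S S_eq lhs_coef.
rewrite (@main_eqm n n (ltnSn n)) rhs_coef.
exact: rhs_val.
Qed.
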